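(* Let $n\ge1$, $b_i,B_i,d_i\ge0$ ($1\le i\le n$), $\theta_{i,j}\ge0$ ($i\ne j$), such that the directed graph on $\{1,\dots,n\}$ with edge set $\{(i,j):i\ne j,\ \theta_{i,j}>0\}$ is strongly connected, all eigenvalues of the matrix $A$ (defined in the context) have negative real parts, and $B=(B_1,\dots,B_n)\neq0$. Then there exist $v\in\mathbb{R}^n$ with positive coordinates, $c>0$ and $R\ge0$ such that $$v\cdot(Ax+B)<-c\,(v\cdot x+1)$$ for every $x\in\mathbb{R}_+^n$ with $\|x\|_1\ge R$.
   Context: $A\in\mathcal{M}_n(\mathbb{R})$ has entries $A_{i,i}=b_i-d_i-\sum_{j\ne i}\theta_{i,j}$ and $A_{i,j}=\theta_{j,i}$ for $i\ne j$; $\cdot$ is the usual scalar product. *)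

(* Defs.v *)
From HB Require Import structures.
From mathcomp Require Import all_boot all_order all_algebra.
From mathcomp Require Import reals.
From mathcomp Require Import complex.
Set Implicit Arguments. Unset Strict Implicit. Unset Printing Implicit Defensive.
Import Order.TTheory GRing.Theory Num.Theory.
Local Open Scope ring_scope.

Definition Amat (R : realType) (n : nat) (b d : 'I_n -> R) (theta : 'I_n -> 'I_n -> R)
  : 'M[R]_n :=
  \matrix_(i, j) (if i == j then b i - d i - \sum_(k | k != i) theta i k
                  else theta j i).

Definition theta_edge (R : realType) (n : nat) (theta : 'I_n -> 'I_n -> R) : rel 'I_n :=
  fun i j => (i != j) && (0 < theta i j).

Definition strongly_connected (n : nat) (e : rel 'I_n) : Prop :=
  forall i j : 'I_n, connect e i j.

Definition complex_eigenvalue (R : realType) (n : nat) (M : 'M[R]_n) (z : R[i]) : bool :=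
  eigenvalue (map_mx (fun x : R => (x%:C)%C) M) z.

Definition dotv (R : realType) (n : nat) (u w : 'cV[R]_n) : R :=
  \sum_(i < n) u i 0 * w i 0.

Definition norm1 (R : realType) (n : nat) (x : 'cV[R]_n) : R :=
  \sum_(i < n) `|x i 0|.

(* Main.v *)
Require Import Defs.
From HB Require Import structures.
From mathcomp Require Import all_boot all_order all_algebra.
From mathcomp Require Import reals.
From mathcomp Require Import complex.
From mathcomp Require Import polyrcf classical_sets lra.
Import Order.TTheory GRing.Theory Num.Theory.
Local Open Scope ring_scope.

Section Aux.
Set Implicit Arguments. Unset Strict Implicit.
Variable R : realType.

Definition dpoly k (M : 'M[R]_k) : {poly R} := \det (map_mx polyC M + 'X%:M).

Lemma dpolyE k (M : 'M[R]_k) t : (dpoly M).[t] = \det (M + t%:M).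
Proof.
rewrite /dpoly -horner_evalE -det_map_mx map_mxD map_scalar_mx /= horner_evalE hornerX.
congr (\det (_ + _)); apply/matrixP => i j; rewrite !mxE /= horner_evalE hornerC //.
Qed.

Lemma right_lim (p : {poly R}) q : (forall t, q < t -> 0 <= p.[t]) -> 0 <= p.[q].
Proof.
move=> H; rewrite leNgt; apply/negP => Hq.
have e0 : 0 < - p.[q] by rewrite oppr_gt0.
have [d d0 Hd] := poly_cont q p e0.
have d2 : 0 < d / 2 by rewrite divr_gt0.
have h1 : 0 <= p.[q + d/2] by apply: H; rewrite ltrDl.
have := Hd (q + d / 2).
rewrite addrAC subrr add0r ger0_norm ?ltW //.
have -> : d / 2 < d by lra.
move=> /(_ isT); rewrite ltr_norml => /andP[h2 h3]; lra.
Qed.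
Lemma last_root (p : {poly R}) t0 T : p.[t0] <= 0 ->
  (forall t, T <= t -> 0 < p.[t]) ->
  exists q, t0 <= q /\ p.[q] = 0 /\ forall t, q < t -> 0 < p.[t].
Proof.
move=> H0 HT.
pose E : set R := fun t => t0 <= t /\ p.[t] <= 0.
have hs : has_sup E.
  split; first by exists t0; split.
  exists T => t [_ ht]; rewrite leNgt; apply/negP => /ltW /HT; rewrite ltNge ht.
  by [].
have ub := sup_upper_bound hs.
have tq : t0 <= sup E by apply: ub; split.
have Hr : forall t, sup E < t -> 0 < p.[t].
  move=> t lt; rewrite ltNge; apply/negP => pt.
  have : t <= sup E by apply: ub; split => //; apply: le_trans (ltW lt).
  by rewrite leNgt lt.
exists (sup E); split => //; split => //.
apply/eqP; rewrite eq_le; apply/andP; split; last first.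
  by apply: right_lim => t /Hr /ltW.
rewrite leNgt; apply/negP => Hq.
have [d d0 Hd] := poly_cont (sup E) p Hq.
have [e [e1 e2] e3] := sup_adherent d0 hs.
have : `|e - sup E| < d.
  have : e <= sup E by apply: ub.
  rewrite ltr_norml => h; apply/andP; split; lra.
move/Hd; rewrite ltr_norml => /andP[h2 h3]; lra.
Qed.

Definition Zmx k (M : 'M[R]_k) := forall i j, i != j -> M i j <= 0.
Definition semipos k (M : 'M[R]_k) := exists w : 'rV[R]_k,
  (forall j, 0 < w 0 j) /\ (forall j, 0 < (w *m M) 0 j).
Definition solv k (M : 'M[R]_k) := forall y : 'rV[R]_k, (forall j, 0 <= y 0 j) ->
  exists x : 'rV[R]_k, (forall j, 0 <= x 0 j) /\ x *m M = y.

Lemma schur k (M : 'M[R]_(1+k)) (z : 'rV[R]_k) : z *m drsubmx M = - ursubmx M ->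
  \det M = (ulsubmx M + z *m dlsubmx M) 0 0 * \det (drsubmx M).
Proof.
move=> hz.
pose U : 'M[R]_(1+k) := block_mx 1 z 0 1.
have dU : \det U = 1 by rewrite det_ublock !det1 mulr1.
have : U *m M = block_mx (ulsubmx M + z *m dlsubmx M) 0 (dlsubmx M) (drsubmx M).
  by rewrite -{1}[M]submxK mulmx_block !mul1mx !mul0mx !add0r hz addrN.
by move/(congr1 determinant); rewrite det_mulmx dU mul1r det_lblock det_mx11.
Qed.

Lemma ord_split k (P : 'I_(1+k) -> Prop) : (forall j, P (lshift k j)) ->
  (forall j, P (rshift 1 j)) -> forall j, P j.
Proof. by move=> h1 h2 j; rewrite -(splitK j); case: (split j) => /=. Qed.

Lemma mulmx_rowE k n (x : 'rV[R]_k) (M : 'M[R]_(k,n)) j :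
  (x *m M) 0 j = \sum_i x 0 i * M i j.
Proof. by rewrite mxE. Qed.


Lemma rowblk k (x : 'rV[R]_(1+k)) (M : 'M[R]_(1+k)) :
  x *m M = row_mx (x 0 (lshift k (0:'I_1)) *: ulsubmx M + rsubmx x *m dlsubmx M)
                  (x 0 (lshift k (0:'I_1)) *: ursubmx M + rsubmx x *m drsubmx M).
Proof.
rewrite -{1}[x]hsubmxK -{1}[M]submxK mul_row_block.
rewrite [lsubmx x]mx11_scalar !mul_scalar_mx.
by rewrite [lsubmx x 0 0]mxE.
Qed.

Lemma Zsub k (M : 'M[R]_(1+k)) : Zmx M ->
  [/\ Zmx (drsubmx M), forall j, ursubmx M 0 j <= 0 & forall i, dlsubmx M i 0 <= 0].
Proof.
move=> ZM; split.
- move=> i j ij; rewrite !mxE; apply: ZM.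
  by rewrite (inj_eq (@rshift_inj _ _)).
- by move=> j; rewrite !mxE; apply: ZM; rewrite eq_lrshift.
- by move=> i; rewrite !mxE; apply: ZM; rewrite eq_rlshift.
Qed.

Lemma row_le0 k (x : 'rV[R]_k) (c : 'cV[R]_k) : (forall j, 0 <= x 0 j) ->
  (forall i, c i 0 <= 0) -> (x *m c) 0 0 <= 0.
Proof.
move=> hx hc; rewrite mxE; apply: sumr_le0 => i _; exact: mulr_ge0_le0.
Qed.

Lemma DD k : forall M : 'M[R]_k, Zmx M -> semipos M -> 0 < \det M /\ solv M.
Proof.
elim: k => [|k IH] M.
  move=> _ _; split; first by rewrite det_mx00.
  by move=> y _; exists 0; split; [case | apply/matrixP => i; case].

move: M; rewrite -[k.+1]/(1+k)%N => M ZM [w [wpos wMpos]].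
have [ZN rneg cneg] := @Zsub k M ZM.
set N := drsubmx (M : 'M_(1+k)) in ZN *.
set r := ursubmx (M : 'M_(1+k)) in rneg *.
set c := dlsubmx (M : 'M_(1+k)) in cneg *.
set a := ulsubmx (M : 'M_(1+k)).
set w0 := w 0 (lshift k (0:'I_1)).
set w' := rsubmx (w : 'rV_(1+k)).
have w0pos : 0 < w0 by apply: wpos.
have w'pos : forall j, 0 < w' 0 j by move=> j; rewrite mxE.
have wMr : forall j, (w *m M) 0 (rshift 1 j) = w0 * r 0 j + (w' *m N) 0 j.
  by move=> j; rewrite (rowblk (w : 'rV_(1+k))) row_mxEr !mxE.
have wMl : (w *m M) 0 (lshift k (0:'I_1)) = w0 * a 0 0 + (w' *m c) 0 0.
  by rewrite (rowblk (w : 'rV_(1+k))) row_mxEl !mxE.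
have wNpos : forall j, 0 < (w' *m N) 0 j.
  move=> j; have := wMpos (rshift 1 j); rewrite wMr.
  have := rneg j; have := w0pos; nra.
have [dN sN] := IH N ZN (ex_intro _ w' (conj w'pos wNpos)).
have NU : N \in unitmx by rewrite unitmxE unitfE gt_eqF.
have [z [zpos hz]] : exists z : 'rV_k, (forall j, 0 <= z 0 j) /\ z *m N = - r.
  by apply: sN => j; rewrite mxE oppr_ge0.
have dM := schur hz.
set s := (ulsubmx _ + z *m dlsubmx _) 0 0 in dM.
have sE : s = a 0 0 + (z *m c) 0 0 by rewrite /s mxE.
have spos : 0 < s.
  pose u := w' - w0 *: z.
  have uN : forall j, 0 <= (u *m N) 0 j.
    move=> j; rewrite mulmxBl -scalemxAl hz scalerN opprK mxE [(w0 *: r) 0 j]mxE.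
    have := wMpos (rshift 1 j); rewrite wMr; lra.
  have [x [xpos hx]] := sN _ uN.
  have xu : x = u by apply: (can_inj (mulmxK NU)).
  have uc : (u *m c) 0 0 <= 0 by rewrite -xu; apply: row_le0.
  have ucE : (u *m c) 0 0 = (w' *m c) 0 0 - w0 * (z *m c) 0 0.
    by rewrite mulmxBl -scalemxAl !mxE.
  have := wMpos (lshift k (0:'I_1)); rewrite wMl => h.
  have e : w0 * s = w0 * a 0 0 + w0 * (z *m c) 0 0 by rewrite sE mulrDr.
  have : 0 < w0 * s by lra.
  by rewrite pmulr_rgt0.
split; first by rewrite dM mulr_gt0.
move=> y ypos.
have [z1 [z1pos hz1]] := sN (rsubmx (y : 'rV_(1+k))) (fun j => ltac:(rewrite mxE; apply: ypos)).
set y0 := y 0 (lshift k (0:'I_1)).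
have z1c := row_le0 z1pos cneg.
set x0 := (y0 - (z1 *m c) 0 0) / s.
have x0pos : 0 <= x0 by rewrite divr_ge0 ?(ltW spos) // subr_ge0 (le_trans z1c) ?ypos.
exists (row_mx x0%:M (z1 + x0 *: z) : 'rV_(1+k)); split.
  apply: ord_split => j; first by rewrite row_mxEl !ord1 mxE eqxx mulr1n.
  by rewrite row_mxEr !mxE; apply: addr_ge0; [exact: z1pos | exact: mulr_ge0].
rewrite (rowblk (row_mx x0%:M (z1 + x0 *: z) : 'rV_(1+k))) row_mxEl row_mxKr mxE eqxx mulr1n.
rewrite -[y]hsubmxK; congr row_mx.
  apply/matrixP => i j; rewrite !ord1 mulmxDl -scalemxAl !mxE.
  rewrite -/a -/c -/y0.
  have : x0 * s = y0 - (z1 *m c) 0 0 by rewrite /x0 divfK // gt_eqF.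
  rewrite sE !mxE; lra.
by rewrite mulmxDl -scalemxAl hz1 hz scalerN addrC subrK.
Qed.

Definition Hpos k (M : 'M[R]_k) := forall t, 0 <= t -> 0 < \det (M + t%:M).

Lemma Zshift k (M : 'M[R]_k) t : Zmx M -> Zmx (M + t%:M).
Proof. by move=> ZM i j ij; rewrite !mxE (negbTE ij) mulr0n addr0; apply: ZM. Qed.

Lemma bigT k (M : 'M[R]_k) : Zmx M -> exists T, forall t, T <= t -> 0 < \det (M + t%:M).
Proof.
move=> ZM; exists (1 + \sum_i \sum_j `|M i j|) => t tT.
have [] := DD (Zshift t ZM); last by [].
exists (const_mx 1); split => j; first by rewrite mxE.
rewrite mulmxDr mul_mx_scalar !mxE mulr1.
have h1 : - \sum_i \sum_j `|M i j| <= \sum_i (const_mx 1 : 'rV[R]_k) 0 i * M i j.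
  rewrite -sumrN; apply: ler_sum => i _; rewrite mxE mul1r.
  rewrite (bigD1 j) //= opprD.
  have : 0 <= \sum_(j0 | j0 != j) `|M i j0| by apply: sumr_ge0.
  have := ler_norm (- M i j); rewrite normrN; lra.
lra.
Qed.

Lemma blk_shift k (M : 'M[R]_(1+k)) t :
  M + t%:M = block_mx (ulsubmx M + t%:M) (ursubmx M) (dlsubmx M) (drsubmx M + t%:M).
Proof. by rewrite -{1}[M]submxK (scalar_mx_block 1 k) add_block_mx !addr0. Qed.

Lemma main_ind k : forall M : 'M[R]_k, Zmx M -> Hpos M -> semipos M.
Proof.
elim: k => [|k IH] M.
  by move=> _ _; exists 0; split; case.
move: M; rewrite -[k.+1]/(1+k)%N => M ZM HM.
have [ZN rneg cneg] := @Zsub k M ZM.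
set N := drsubmx M in ZN *.
set r := ursubmx M in rneg *.
set c := dlsubmx M in cneg *.
set a := ulsubmx M.
have HN : Hpos N.
  move=> t0 t00; rewrite ltNge; apply/negP => h.
  have [T hT] := bigT ZN.
  rewrite -dpolyE in h.
  have hT' : forall t, T <= t -> 0 < (dpoly N).[t] by move=> t tT; rewrite dpolyE; exact: hT.
  have [q [t0q [pq qpos]]] := last_root h hT'.
  pose g := ((a 0 0)%:P + 'X) * dpoly N - dpoly M.
  have : 0 <= g.[q].
    apply: right_lim => t qt.
    have HNt : Hpos (N + t%:M).
      move=> u u0; rewrite -addrA -raddfD -dpolyE; apply: qpos; lra.
    have [w Hw] := IH _ (Zshift t ZN) HNt.
    have [dNt sNt] := DD (Zshift t ZN) (ex_intro _ w Hw).
    have [z [zpos hz]] : exists z : 'rV_k, (forall j, 0 <= z 0 j) /\ z *m (N + t%:M) = - r.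
      by apply: sNt => j; rewrite mxE oppr_ge0.
    have hz' : z *m drsubmx (M + t%:M) = - ursubmx (M + t%:M).
      by rewrite blk_shift block_mxKdr block_mxKur.
    have dM := schur hz'.
    rewrite blk_shift block_mxKul block_mxKdl block_mxKdr in dM.
    have zc := row_le0 zpos cneg.
    rewrite /g !hornerE !dpolyE -/N blk_shift dM.
    rewrite [(_ + z *m c) 0 0]mxE [(a + _) 0 0]mxE [(_%:M) 0 0]mxE eqxx mulr1n.
    have := dNt; nra.
  rewrite /g !hornerE pq mulr0 add0r dpolyE oppr_ge0 => h2.
  have := HM q (le_trans t00 t0q); rewrite ltNge h2; by [].
have [wN [wNpos wNNpos]] := IH N ZN HN.
have [dN sN] := DD ZN (ex_intro _ wN (conj wNpos wNNpos)).
have [z [zpos hz]] : exists z : 'rV_k, (forall j, 0 <= z 0 j) /\ z *m N = - r.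
  by apply: sN => j; rewrite mxE oppr_ge0.
have dM := schur hz.
set s := (ulsubmx _ + z *m dlsubmx _) 0 0 in dM.
have sE : s = a 0 0 + (z *m c) 0 0 by rewrite /s mxE.
have spos : 0 < s.
  have := HM 0 (lexx 0); rewrite raddf0 addr0 dM pmulr_lgt0 //.
have wNc := row_le0 (fun j => ltW (wNpos j)) cneg.
set qq := (wN *m c) 0 0 in wNc.
pose e := s / (1 - qq).
have epos : 0 < e by rewrite divr_gt0 // subr_gt0 (le_lt_trans wNc) ?ltr01.
have ee : e * (1 - qq) = s by rewrite /e divfK // gt_eqF // subr_gt0 (le_lt_trans wNc) ?ltr01.
exists (row_mx 1%:M (z + e *: wN) : 'rV_(1+k)); split.
  apply: ord_split => j; first by rewrite row_mxEl !ord1 mxE eqxx mulr1n ltr01.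
  rewrite row_mxEr !mxE; have := zpos j; have := wNpos j; have := epos; nra.
rewrite (rowblk (row_mx 1%:M (z + e *: wN) : 'rV_(1+k))) row_mxEl row_mxKr mxE eqxx mulr1n !scale1r.
apply: ord_split => j.
  rewrite row_mxEl !ord1 mulmxDl -scalemxAl !mxE -/a -/c.
  have : 0 < s + e * qq by lra.
  rewrite sE /qq !mxE; lra.
rewrite row_mxEr mulmxDl hz -scalemxAl addrA addrN add0r mxE.
exact: mulr_gt0.
Qed.

End Aux.

Theorem lemma1 (R : realType) (n : nat) (b B d : 'I_n -> R)
  (theta : 'I_n -> 'I_n -> R) :
  (1 <= n)%N ->
  (forall i, 0 <= b i) -> (forall i, 0 <= B i) -> (forall i, 0 <= d i) ->
  (forall i j, i != j -> 0 <= theta i j) ->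
  strongly_connected (theta_edge theta) ->
  (forall z : R[i], complex_eigenvalue (Amat b d theta) z -> complex.Re z < 0) ->
  (exists i, B i != 0) ->
  exists (v : 'cV[R]_n) (c R0 : R),
    (forall i, 0 < v i 0) /\ 0 < c /\ 0 <= R0 /\
    forall x : 'cV[R]_n, (forall i, 0 <= x i 0) -> R0 <= norm1 x ->
      dotv v (Amat b d theta *m x + \col_i B i) < - c * (dotv v x + 1).
Proof.
move=> n1 bpos Bpos dpos thpos _ Heig _.
set A := Amat b d theta.
pose M := - A.
have ZM : Zmx M.
  move=> i j ij; rewrite !mxE (negbTE ij) oppr_le0; apply: thpos; by rewrite eq_sym.
have nz : forall t, 0 <= t -> \det (M + t%:M) != 0.
  move=> t t0; apply/negP => /det0P [v v0 hv].
  have hvA : v *m A = t *: v.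
    move: hv; rewrite mulmxDr mul_mx_scalar /M mulmxN addrC => /eqP; rewrite subr_eq0 => /eqP -> //.
  have : complex_eigenvalue A (t%:C)%C.
    rewrite /complex_eigenvalue; apply/eigenvalueP.
    exists (map_mx (real_complex R) v).
      apply/matrixP => i j; rewrite !mxE.
      rewrite (eq_bigr (fun k => real_complex R (v i k * A k j))); last by move=> k _; rewrite rmorphM !mxE.
      have := congr1 (fun m : 'rV[R]_n => real_complex R (m i j)) hvA; rewrite /= !mxE rmorph_sum => ->.
      by rewrite rmorphM.
    by rewrite map_mx_eq0.
  move/Heig => /=; rewrite ltNge t0; done.
have HM : Hpos M.
  move=> t0 t00; rewrite ltNge; apply/negP => h.
  have [T hT] := bigT ZM.
  rewrite -dpolyE in h.
  have hT' : forall t, T <= t -> 0 < (dpoly M).[t] by move=> t tT; rewrite dpolyE; exact: hT.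
  have [q [t0q [pq _]]] := last_root h hT'.
  by move: (nz q (le_trans t00 t0q)); rewrite -dpolyE pq eqxx.
have [_ sM] := DD ZM (main_ind ZM HM).
have [x [xpos hx]] := sM (const_mx 1) (fun j => ltac:(by rewrite mxE ler01)).
have xpos' : forall j, 0 < x 0 j.
  move=> j; rewrite lt_def xpos andbT; apply/eqP => hx0.
  have := congr1 (fun m : 'rV[R]_n => m 0 j) hx; rewrite /= !mxE (bigD1 j) //= hx0 mul0r add0r.
  have : \sum_(i | i != j) x 0 i * M i j <= 0.
    by apply: sumr_le0 => i ij; apply: mulr_ge0_le0 => //; apply: ZM.
  by move=> h1 h2; move: h1; rewrite h2 ler10.
have xA : x *m A = - const_mx 1 by rewrite -hx /M mulmxN opprK.
have dotE : forall y : 'cV[R]_n, dotv x^T y = (x *m y) 0 0.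
  by move=> y; rewrite /dotv mxE; apply: eq_bigr => i _; rewrite mxE.
pose V := \sum_i x 0 i.
have xV : forall i, x 0 i <= V.
  move=> i; rewrite /V (bigD1 i) //= lerDl; apply: sumr_ge0 => k _; exact: xpos.
have Vpos : 0 < V by apply: lt_le_trans (xpos' (Ordinal n1)) (xV _).
pose K := (x *m \col_i B i) 0 0.
have K0 : 0 <= K by rewrite /K mxE; apply: sumr_ge0 => i _; rewrite mxE mulr_ge0.
pose c := (2 * V)^-1.
have cpos : 0 < c by rewrite invr_gt0 mulr_gt0.
have cV : c * V = 1 / 2 by rewrite /c invfM -mulrA mulVf ?gt_eqF // mulr1 div1r.
exists x^T, c, (2 * (K + c) + 1); split; first by move=> i; rewrite mxE.
split => //; split; first by lra.
move=> y ypos yR.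
have nE : norm1 y = \sum_i y i 0 by apply: eq_bigr => i _; rewrite ger0_norm.
rewrite nE in yR.
rewrite !dotE mulmxDr mxE mulmxA xA -/K.
rewrite [in X in X + K]mxE.
under eq_bigr => i _ do rewrite !mxE mulN1r.
rewrite sumrN.
have h1 : (x *m y) 0 0 <= V * \sum_i y i 0.
  rewrite mxE mulr_sumr; apply: ler_sum => i _; apply: ler_wpM2r => //.
have h2 : c * (x *m y) 0 0 <= c * (V * \sum_i y i 0) by rewrite ler_wpM2l // ltW.
rewrite mulrA cV in h2.
lra.
Qed.
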